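(* Let $G$ be a group. Then $G$ is a $TR^{*}$-group if and only if there exists a normal subgroup $K$ of $G$ which is a torsion group such that $G/K$ is an $R^{*}$-group.
   Context: For $g,x$ in a group, $g^{x}:=xgx^{-1}$. A non-trivial element $g$ of a group $G$ is a generalized torsion element if there exist a positive integer $n$ and $x_1,\ldots,x_n\in G$ with $g^{x_1}g^{x_2}\cdots g^{x_n}=1$. A generalized torsion element is genuine if it is not a torsion element. A group is an $R^{*}$-group if it has no generalized torsion elements. A group is a $TR^{*}$-group if it has no genuine generalized torsion element, i.e. every generalized torsion element is a torsion element. A torsion group is a group all of whose elements have finite order. *)

(* Defs.v *)
(* abstract (possibly infinite) groups via mathcomp's
   [groupType] from boot/monoid.v.  Notation: x ^ y := y^-1 * x * y. *)
From HB Require Import structures.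
From mathcomp Require Import all_boot.
Set Implicit Arguments. Unset Strict Implicit. Unset Printing Implicit Defensive.
Local Open Scope group_scope.

Section Defs.
Variable G : groupType.

Definition torsion_elt (g : G) : Prop := exists n : nat, (0 < n)%N /\ g ^+ n = 1.

Definition gen_torsion (g : G) : Prop :=
  g <> 1 /\ exists xs : seq G, xs <> [::] /\ \prod_(x <- xs) (g ^ x) = 1.

Definition genuine_gen_torsion (g : G) : Prop := gen_torsion g /\ ~ torsion_elt g.

Definition Rstar_group : Prop := forall g : G, ~ gen_torsion g.

Definition TRstar_group : Prop := forall g : G, ~ genuine_gen_torsion g.

Definition normal_subgroup (K : G -> Prop) : Prop :=
  [/\ K 1,
      (forall x y, K x -> K y -> K (x * y)),
      (forall x, K x -> K x^-1) &
      (forall x y, K x -> K (x ^ y))].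

Definition torsion_subset (K : G -> Prop) : Prop := forall x, K x -> torsion_elt x.

End Defs.

Definition quotient_map (G Q : groupType) (K : G -> Prop) (f : G -> Q) : Prop :=
  [/\ (forall x y, f (x * y) = f x * f y),
      (forall q : Q, exists x, f x = q) &
      (forall x, f x = 1 <-> K x)].

(* Main.v *)
Require Import Defs.
From HB Require Import structures.
From mathcomp Require Import all_boot.
From mathcomp Require Import boolp.
Set Implicit Arguments. Unset Strict Implicit. Unset Printing Implicit Defensive.
Local Open Scope group_scope.

Section Gen.
Variable G : groupType.
Implicit Types x y z g : G.

Lemma prod_conj_pow g (s : seq G) m :
  (\prod_(x <- s) g ^ x) ^+ m = \prod_(x <- flatten (nseq m s)) g ^ x.
Proof.
elim: m => [|m IH]; first by rewrite expg0 big_nil.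
by rewrite expgS IH /= big_cat.
Qed.

Lemma flatten_nseq_nil (s : seq G) m : s <> [::] -> (0 < m)%N ->
  flatten (nseq m s) <> [::].
Proof. by case: m => // m; case: s. Qed.

Lemma pow_expand x z k :
  (x^-1 * z) ^+ k = (\prod_(i <- iota 1 k) z ^ (x ^+ i)) * (x ^+ k)^-1.
Proof.
elim: k => [|k IH]; first by rewrite big_nil expg0 invg1 mulg1.
have -> : iota 1 k.+1 = iota 1 k ++ [:: k.+1].
  by rewrite -[k.+1]addn1 iotaD add1n addn1.
rewrite expgSr IH big_cat /= big_seq1.
rewrite -!mulgA; congr (_ * _).
by rewrite [x ^+ k.+1]expgS invgM !mulgA !mulgK.
Qed.
End Gen.

Section Quot.
Variables (G : groupType) (K : G -> Prop) (hK : normal_subgroup K).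
Implicit Types x y z g : G.

Lemma K1 : K 1. Proof. by case: hK. Qed.
Lemma KM x y : K x -> K y -> K (x * y). Proof. by case: hK => _ h _ _; apply: h. Qed.
Lemma KV x : K x -> K x^-1. Proof. by case: hK => _ _ h _; apply: h. Qed.
Lemma KJ x y : K x -> K (x ^ y). Proof. by case: hK => _ _ _ h; apply: h. Qed.

Definition coset x : G -> Prop := fun y => K (x^-1 * y).
Definition qT' (h : normal_subgroup K) := {P : G -> Prop | exists x, P = coset x}.
Local Notation qT := (qT' hK).
HB.instance Definition _ := gen_eqMixin qT.
HB.instance Definition _ := gen_choiceMixin qT.

Definition pi x : qT := exist _ (coset x) (ex_intro _ x erefl).
Definition rep (q : qT) : G := projT1 (cid (proj2_sig q)).

Lemma repK q : pi (rep q) = q.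
Proof.
case: q => P hP; rewrite /rep /=; case: cid => x e /=.
by apply: eq_exist; rewrite e.
Qed.

Lemma piP x y : pi x = pi y <-> K (x^-1 * y).
Proof.
split.
  move=> /(f_equal (@proj1_sig _ _)) /= e.
  have : coset y y by rewrite /coset mulVg; exact: K1.
  by rewrite -e.
move=> h; apply: eq_exist; apply: funext => w; apply: propext; rewrite /coset; split.
  move=> hw; have := KM (KV h) hw.
  by rewrite invgM invgK mulgA mulgK.
move=> hw; have := KM h hw.
by rewrite -mulgA mulVKg.
Qed.

Lemma Kcompat a a' b b' : K (a^-1 * a') -> K (b^-1 * b') -> K ((a * b)^-1 * (a' * b')).
Proof.
move=> ha hb; have := KM (KJ b ha) hb.
by rewrite conjgE invgM !mulgA mulgK.
Qed.

Lemma Kcompat_inv a a' : K (a^-1 * a') -> K (a^-1^-1 * a'^-1).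
Proof.
move=> ha; have := KJ (a'^-1) (KV ha).
by rewrite conjgE invgM invgK !mulgA mulgV mul1g.
Qed.

Lemma rep_pi x : K ((rep (pi x))^-1 * x).
Proof. by apply/piP; rewrite repK. Qed.

Definition qmul (q r : qT) : qT := pi (rep q * rep r).
Definition qone : qT := pi 1.
Definition qinv (q : qT) : qT := pi (rep q)^-1.

Lemma pimul x y : qmul (pi x) (pi y) = pi (x * y).
Proof. apply/piP; apply: Kcompat; exact: rep_pi. Qed.

Lemma piinv x : qinv (pi x) = pi x^-1.
Proof. apply/piP; apply: Kcompat_inv; exact: rep_pi. Qed.

Lemma qmulA : associative qmul.
Proof. by move=> q r s; rewrite -[q]repK -[r]repK -[s]repK !pimul mulgA. Qed.
Lemma qmul1 : left_id qone qmul.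
Proof. by move=> q; rewrite -[q]repK /qone pimul mul1g. Qed.
Lemma qmulr1 : right_id qone qmul.
Proof. by move=> q; rewrite -[q]repK /qone pimul mulg1. Qed.
Lemma qmulV : left_inverse qone qinv qmul.
Proof. by move=> q; rewrite -[q]repK piinv pimul mulVg. Qed.
Lemma qmulVr : right_inverse qone qinv qmul.
Proof. by move=> q; rewrite -[q]repK piinv pimul mulgV. Qed.

HB.instance Definition _ := isGroup.Build qT qmulA qmul1 qmulr1 qmulV qmulVr.

Lemma pi_morph x y : pi (x * y) = pi x * pi y.
Proof. by rewrite -pimul. Qed.

Lemma pi_conj a b : (pi a) ^ (pi b) = pi (a ^ b).
Proof. rewrite conjgE -!pi_morph; apply/piP; apply: Kcompat; first (apply: Kcompat_inv; exact: rep_pi). apply: Kcompat; exact: rep_pi. Qed.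

Lemma pi_quot : quotient_map K pi.
Proof.
split.
- exact: pi_morph.
- by move=> q; exists (rep q); rewrite repK.
- move=> x; change (pi x = pi 1 <-> K x); rewrite piP mulg1; split.
    by move/KV; rewrite invgK.
  exact: KV.
Qed.

Lemma pi_prod g (xs : seq qT) :
  \prod_(x <- xs) (pi g) ^ x = pi (\prod_(x <- map rep xs) g ^ x).
Proof.
elim: xs => [|x xs IH]; first by rewrite !big_nil.
rewrite /= !big_cons IH -{1}[x]repK pi_conj; exact: pimul.
Qed.

Lemma qT_Rstar : torsion_subset K -> (forall g, gen_torsion g -> K g) ->
  Rstar_group qT.
Proof.
move=> tK gK q [q1 [xs [xs0 hp]]].
move: q1 hp; rewrite -[q]repK; set g := rep q => q1.
rewrite pi_prod => /piP; rewrite mulg1 => /KV; rewrite invgK => /tK [n [n0 hn]].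
have g1 : g <> 1 by move=> e; apply: q1; rewrite e.

have gt : gen_torsion g.
  split=> //; exists (flatten (nseq n (map rep xs))); split.
    by apply: flatten_nseq_nil => //; case: (xs) xs0.
  by rewrite -prod_conj_pow.
apply: q1; apply/piP; rewrite mulg1; apply: KV; exact: gK.
Qed.
End Quot.

Theorem theorem1p1 (G : groupType) :
  TRstar_group G <->
  exists K : G -> Prop,
    [/\ normal_subgroup K, torsion_subset K &
        exists (Q : groupType) (f : G -> Q), quotient_map K f /\ Rstar_group Q].
Proof.
split.
- move=> TR.
  have gtt : forall g : G, gen_torsion g -> torsion_elt g.
    move=> g hg; case: (pselect (torsion_elt g)) => // hnt; case: (TR g (conj hg hnt)).
  have tor1 : torsion_elt (1 : G) by exists 1%N; rewrite expg1.
  have hK : normal_subgroup (@torsion_elt G).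
    split.
    + exact: tor1.
    + move=> x y [m [m0 hm]] [n [n0 hn]].
      set z := x * y.
      have ey : y = x^-1 * z by rewrite /z mulKg.
      have := pow_expand x z n; rewrite -ey hn => e.
      have eP : \prod_(i <- iota 1 n) z ^ (x ^+ i) = x ^+ n.
        by apply/esym/(@mulIg _ (x ^+ n)^-1); rewrite -e mulgV.
      have hP : \prod_(w <- flatten (nseq m (map (fun i => x ^+ i) (iota 1 n)))) z ^ w = 1.
        by rewrite -prod_conj_pow big_map eP -expgnA mulnC expgnA hm expg1n.
      have [->|z1] := (pselect (z = 1)); first exact: tor1.
      apply: gtt; split=> //; exists (flatten (nseq m (map (fun i => x ^+ i) (iota 1 n)))).
      split=> //; apply: flatten_nseq_nil => //.
      by case: n n0 {e eP hP hn ey}.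
    + move=> x [n [n0 hn]]; exists n; split=> //.
      by rewrite expVgn hn invg1.
    + move=> x y [n [n0 hn]]; exists n; split=> //.
      by rewrite -conjXg hn conj1g.
  exists (@torsion_elt G); split=> //.
  exists (qT' hK), (pi hK); split; first exact: pi_quot.
  apply: qT_Rstar => // g hg; exact: gtt.
- case=> K [hK tK [Q [f [[fM fS fK] RQ]]]] g [[g1 [xs [xs0 hp]]] nt].
  have f1 : f 1 = 1.
    by apply: (@mulgI _ (f 1)); rewrite -fM !mulg1.
  have fV : forall x, f x^-1 = (f x)^-1.
    by move=> x; apply/esym/mulg1_eq; rewrite -fM mulgV.
  have fJ : forall x y, f (x ^ y) = (f x) ^ (f y).
    by move=> x y; rewrite conjgE !fM fV.
  have fP : f (\prod_(x <- xs) g ^ x) = \prod_(x <- map f xs) (f g) ^ x.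
    elim: (xs) => [|x s IH]; first by rewrite !big_nil.
    by rewrite /= !big_cons fM IH fJ.
  have [e|ne] := pselect (f g = 1).
    by apply: nt; apply: tK; apply/fK.
  apply: (RQ (f g)); split=> //; exists (map f xs); split.
    by case: (xs) xs0.
  by rewrite -fP hp.
Qed.
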